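(* Let $B\in\mathbb{R}^{m\times m}$ be symmetric positive definite with eigenvalues $0<\lambda_1\le\lambda_2\le\cdots\le\lambda_m\le 1$ and corresponding orthonormal eigenvectors $u_1,\dots,u_m$. Let $1\le k<m$ and assume $\lambda_k\le 1/2$. For $1\le j\le k$ set $$\gamma_{j,k}=\frac{\lambda_{k+1}^{-1}-1}{\lambda_j^{-1}-1}\quad(\text{so }0\le\gamma_{j,k}\le 1).$$ Let $p\ge 2$ and $q\ge 0$ be integers, and let $\widetilde U\in\mathbb{R}^{m\times(k+p)}$ be a random matrix which almost surely has full column rank, and let $c\ge 0$ be a random variable, such that almost surely $$\|u_j-\Pi_{\widetilde U}u_j\|_2\le \gamma_{j,k}^{\,q+1}\,c\qquad\text{for all } j=1,\dots,k,$$ where $\Pi_{\widetilde U}$ is the orthogonal projector onto the column space of $\widetilde U$, and such that $$\mathbb{E}(c)=\sqrt{\frac{k}{p-1}}+\frac{e\sqrt{(k+p)(m-k)}}{p}.$$ Define $E=\widetilde U^\top B\widetilde U$ and the deflation preconditioner $\mathcal{P}=I-B\widetilde U E^{-1}\widetilde U^\top$. Then $$\mathbb{E}\Big(\sqrt{\kappa_{\mathrm{eff}}(\mathcal{P}B)}\Big)\le c_1\sqrt{\frac{\lambda_m}{\lambda_{k+1}}},$$ where $c_1$ depends only on $k$, $p$ and $m$ (not on the eigenvalues of $B$), and $c_1^2$ is bounded above by a polynomial of degree at most $3$ in $k$ (with coefficients depending only on $p$ and $m$).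
   Context: In the paper, $B=I-H=R_\Gamma^{-\top}S_\Gamma R_\Gamma^{-1}$, where $S_\Gamma$ is a Schur complement, $A_\Gamma=R_\Gamma^\top R_\Gamma$ is a Cholesky factorization, and $\widetilde U$ is produced by Nyström's randomized low-rank approximation with oversampling $p$ and $q$ power iterations; the almost-sure angle bound with the stated $\mathbb{E}(c)$ is the assumed property of that randomized method. $e$ denotes Euler's number. The matrix $\mathcal{P}B=B-B\widetilde U E^{-1}\widetilde U^\top B$ is symmetric positive semidefinite, and its effective condition number $\kappa_{\mathrm{eff}}(\mathcal{P}B)$ is the ratio of its largest eigenvalue to its smallest nonzero eigenvalue. *)

(* Defs.v *)
From HB Require Import structures.
From mathcomp Require Import all_boot all_order all_algebra.
From mathcomp Require Import all_classical all_reals all_analysis.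
Set Implicit Arguments. Unset Strict Implicit. Unset Printing Implicit Defensive.
Import Order.TTheory GRing.Theory Num.Theory.
Local Open Scope ring_scope.
Local Open Scope classical_set_scope.

Section Defs.
Variable R : realType.

Definition norm2 {m : nat} (v : 'cV[R]_m) : R := Num.sqrt (\sum_i (v i 0) ^+ 2).

Definition proj_col {m n : nat} (U : 'M[R]_(m, n)) : 'M[R]_m :=
  U *m invmx (U^T *m U) *m U^T.

Definition defl_prec {m n : nat} (B : 'M[R]_m) (U : 'M[R]_(m, n)) : 'M[R]_m :=
  1%:M - B *m U *m invmx (U^T *m B *m U) *m U^T.

Definition kappa_eff {m : nat} (A : 'M[R]_m) : R :=
  sup [set a | eigenvalue A a] / inf [set a | eigenvalue A a /\ a != 0].

(* gamma_{j,k} = (lambda_{k+1}^{-1} - 1) / (lambda_j^{-1} - 1), 1-based indices *)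
Definition gammajk (lambda : nat -> R) (j k : nat) : R :=
  ((lambda k.+1)^-1 - 1) / ((lambda j)^-1 - 1).

End Defs.

(* Main.v *)
Require Import Defs.
From HB Require Import structures.
From mathcomp Require Import all_boot all_order all_algebra.
From mathcomp Require Import all_classical all_reals all_analysis.
From mathcomp Require Import ring lra.
Import Order.TTheory GRing.Theory Num.Theory.
Import HBNNSimple.
Local Open Scope ring_scope.
Local Open Scope classical_set_scope.

Lemma sum_quad (R : realType) (m : nat) (a b : R) (f g : 'I_m -> R) :
  \sum_i (a * f i - b * g i) ^+ 2 =
  a ^+ 2 * \sum_i f i ^+ 2 - 2 * a * b * \sum_i (f i * g i) + b ^+ 2 * \sum_i g i ^+ 2.
Proof.
rewrite !mulr_sumr -sumrB -big_split /=; apply: eq_bigr => i _; ring.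
Qed.

Lemma CS (R : realType) (m : nat) (f g : 'I_m -> R) :
  (\sum_i (f i * g i)) ^+ 2 <= (\sum_i f i ^+ 2) * (\sum_i g i ^+ 2).
Proof.
have W0 : 0 <= \sum_i g i ^+ 2 by apply: sumr_ge0 => i _; exact: sqr_ge0.
have [Wz|Wp] := eqVneq (\sum_i g i ^+ 2) 0.
  have g0 : forall i, g i = 0.
    move=> i; apply/eqP; rewrite -sqrf_eq0; apply/eqP.
    by move/psumr_eq0P: Wz => -> // j _; exact: sqr_ge0.
  rewrite big1 ?expr0n /=; last by move=> i _; rewrite g0 mulr0.
  by rewrite mulr_ge0 // sumr_ge0 // => i _; exact: sqr_ge0.
have Wgt : 0 < \sum_i g i ^+ 2 by rewrite lt_neqAle eq_sym Wp.
have := @sum_quad R m (\sum_i g i ^+ 2) (\sum_i (f i * g i)) f g.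
set W := \sum_i g i ^+ 2; set X := \sum_i (f i * g i); set V := \sum_i f i ^+ 2.
move=> H.
have H0 : 0 <= \sum_i (W * f i - X * g i) ^+ 2 by apply: sumr_ge0 => i _; exact: sqr_ge0.
rewrite H in H0.
have : 0 <= W * (W * V - X ^+ 2) by lra.
by rewrite pmulr_rge0 // subr_ge0 mulrC.
Qed.

Lemma invle (R : realType) (x y : R) : 0 < x -> x <= y -> y^-1 <= x^-1.
Proof. by move=> x0 xy; rewrite lef_pV2 ?posrE // (lt_le_trans x0 xy). Qed.

Lemma gamma_facts (R : realType) (x y : R) : 0 < x -> x <= 2^-1 -> x <= y -> y <= 1 ->
  0 <= (y^-1 - 1) / (x^-1 - 1) /\ (y^-1 - 1) / (x^-1 - 1) <= 1 /\
  (y^-1 - 1) / (x^-1 - 1) / x <= 2 / y.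
Proof.
move=> x0 xh xy y1.
have y0 : 0 < y by apply: lt_le_trans xy.
set a := x^-1; set b := y^-1.
have a2 : 2 <= a.
  by rewrite /a -[2]invrK; apply: invle => //; rewrite invr_gt0.
have b1 : 1 <= b by rewrite /b -invr1; apply: invle.
have ba : b <= a by apply: invle.
have a1 : 0 < a - 1 by lra.
split; first by apply: divr_ge0; lra.
split; first by rewrite ler_pdivrMr //; lra.
have -> : (b - 1) / (a - 1) / x = (b - 1) * a / (a - 1) by rewrite /a mulrAC.
rewrite ler_pdivrMr //; nra.
Qed.

Section LA.
Variable R : realType.
Variable m : nat.
Variables (B : 'M[R]_m) (lambda : nat -> R) (u : nat -> 'cV[R]_m).
Hypothesis Heig : forall j, (1 <= j <= m)%N -> B *m u j = lambda j *: u j.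
Hypothesis Hon : forall i j, (1<=i<=m)%N -> (1<=j<=m)%N -> (u i)^T *m u j = (i==j)%:R%:M.
Hypothesis Hpos : forall j, (1<=j<=m)%N -> 0 < lambda j.

Definition Qm : 'M[R]_m := \matrix_(i, j) u j.+1 i 0.

Lemma QtQ : Qm^T *m Qm = 1%:M.
Proof.
apply/matrixP => i j; rewrite !mxE.
have := congr1 (fun M : 'M[R]_1 => M 0 0) (@Hon i.+1 j.+1 (ltn_ord i) (ltn_ord j)).
rewrite !mxE /= eqSS mulr1n => <-.
by apply: eq_bigr => l _; rewrite !mxE.
Qed.

Lemma QQt : Qm *m Qm^T = 1%:M.
Proof. exact: mulmx1C QtQ. Qed.

Definition Dm : 'M[R]_m := diag_mx (\row_j lambda j.+1).
Definition Binv : 'M[R]_m := Qm *m diag_mx (\row_j (lambda j.+1)^-1) *m Qm^T.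

Lemma BQ : B *m Qm = Qm *m Dm.
Proof.
apply/matrixP => i j; rewrite /Dm mul_mx_diag !mxE.
have := congr1 (fun M : 'cV[R]_m => M i 0) (@Heig j.+1 (ltn_ord j)).
rewrite !mxE mulrC => <-.
by apply: eq_bigr => l _; rewrite !mxE.
Qed.

Lemma Bdec : B = Qm *m Dm *m Qm^T.
Proof. by rewrite -BQ -mulmxA QQt mulmx1. Qed.

Lemma BBinv : B *m Binv = 1%:M.
Proof.
rewrite {1}Bdec /Binv.
have -> : Qm *m Dm *m Qm^T *m (Qm *m diag_mx (\row_j (lambda j.+1)^-1) *m Qm^T)
   = Qm *m (Dm *m (Qm^T *m Qm) *m diag_mx (\row_j (lambda j.+1)^-1)) *m Qm^T.
  by rewrite !mulmxA.
rewrite QtQ mulmx1 /Dm mulmx_diag.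
set Dd := diag_mx _.
have -> : Dd = 1%:M.
  apply/matrixP => i j; rewrite !mxE; case: eqP => // _.
  by rewrite mulr1n mulfV // gt_eqF // (@Hpos i.+1 (ltn_ord i)).
by rewrite mulmx1 QQt.
Qed.

Lemma Binv_tr : Binv^T = Binv.
Proof. by rewrite /Binv !trmx_mul trmxK tr_diag_mx mulmxA. Qed.

Variables (n : nat) (U : 'M[R]_(m, n)).
Hypothesis HPD : forall x : 'cV[R]_m, x != 0 -> 0 < (x^T *m B *m x) 0 0.
Hypothesis Hrank : \rank U = n.

Lemma E_unit : U^T *m B *m U \in unitmx.
Proof.
rewrite -row_free_unit -kermx_eq0; apply/eqP/row_matrixP => i.
set K := kermx _; set z := row i K.
have zE : z *m (U^T *m B *m U) = 0 by rewrite /z -row_mul mulmx_ker row0.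
have fU : row_free U^T by rewrite /row_free mxrank_tr Hrank.
rewrite row0; apply/eqP; rewrite -(mulmx_free_eq0 _ fU); apply/eqP.
apply/trmx_inj; rewrite trmx0 trmx_mul trmxK.
apply/eqP; apply: contraLR isT => /HPD; rewrite !trmx_mul !trmxK.
have -> : z *m U^T *m B *m (U *m z^T) = z *m (U^T *m B *m U) *m z^T by rewrite !mulmxA.
by rewrite zE mul0mx mxE ltxx.
Qed.

Lemma eig_props a (v : 'rV[R]_m) : v *m (defl_prec B U *m B) = a *: v -> a != 0 ->
  v *m U = 0 /\ v *m v^T = a *: (v *m Binv *m v^T).
Proof.
move=> Hv a0.
set E := U^T *m B *m U.
set w := v *m B *m U *m invmx E.
set y := v - w *m U^T.
have Hy : a *: v = y *m B.
  rewrite -Hv /defl_prec /y mulmxBl mulmxBr mul1mx mulmxBl /w -/E.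
  by rewrite !mulmxA.
have vU : v *m U = 0.
  suff : a *: (v *m U) == 0 by rewrite scalemx_eq0 (negbTE a0) => /eqP.
  apply/eqP; rewrite scalemxAl Hy /y.
  rewrite mulmxBl mulmxBl /w.
  have -> : v *m B *m U *m invmx E *m U^T *m B *m U = v *m B *m U *m (invmx E *m E).
    by rewrite /E !mulmxA.
  by rewrite mulVmx ?E_unit // mulmx1 subrr.
split => //.
have -> : v *m v^T = v *m y^T.
  by rewrite /y linearB /= trmx_mul trmxK mulmxDr mulmxN mulmxA vU mul0mx subr0.
have -> : y = a *: (v *m Binv) by rewrite scalemxAl Hy -mulmxA BBinv mulmx1.
by rewrite linearZ /= -scalemxAr trmx_mul Binv_tr mulmxA.
Qed.

Lemma vvT (v : 'rV[R]_m) : (v *m v^T) 0 0 = \sum_j (v 0 j) ^+ 2.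
Proof. by rewrite mxE; apply: eq_bigr => j _; rewrite !mxE expr2. Qed.

Lemma vvT_coord (v : 'rV[R]_m) : (v *m v^T) 0 0 = \sum_j ((v *m Qm) 0 j) ^+ 2.
Proof.
have -> : v *m v^T = (v *m Qm) *m (v *m Qm)^T.
  by rewrite trmx_mul -mulmxA (mulmxA Qm) QQt mul1mx.
exact: vvT.
Qed.

Lemma vBinvvT_coord (v : 'rV[R]_m) :
  (v *m Binv *m v^T) 0 0 = \sum_j ((v *m Qm) 0 j) ^+ 2 / lambda j.+1.
Proof.
have -> : v *m Binv *m v^T =
    (v *m Qm) *m diag_mx (\row_j (lambda j.+1)^-1) *m (v *m Qm)^T.
  by rewrite /Binv trmx_mul !mulmxA.
rewrite mul_mx_diag mxE; apply: eq_bigr => j _; rewrite !mxE.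
by rewrite expr2 mulrAC.
Qed.

Lemma coordE (v : 'rV[R]_m) (j : 'I_m) : (v *m Qm) 0 j = (v *m u j.+1) 0 0.
Proof. by rewrite !mxE; apply: eq_bigr => l _; rewrite !mxE. Qed.

Variables (k q : nat) (c : R).
Hypothesis Hk : (k < m)%N.
Hypothesis Hmono : forall i j, (1 <= i)%N -> (i <= j)%N -> (j <= m)%N -> lambda i <= lambda j.
Hypothesis Hlm : lambda m <= 1.
Hypothesis Hlk : lambda k <= 2^-1.
Hypothesis Happ : forall j, (1 <= j <= k)%N ->
  norm2 (u j - proj_col U *m u j) <= gammajk lambda j k ^+ q.+1 * c.
Hypothesis Hc : 0 <= c.

Lemma coord_sq_bound (v : 'rV[R]_m) (j : 'I_m) : v *m U = 0 ->
  ((v *m Qm) 0 j) ^+ 2 <= (v *m v^T) 0 0 * norm2 (u j.+1 - proj_col U *m u j.+1).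
Proof.
move=> vU.
set w := u j.+1 - proj_col U *m u j.+1.
have vw : (v *m Qm) 0 j = (v *m w) 0 0.
  rewrite coordE /w mulmxBr /proj_col !mulmxA vU !mul0mx subr0 //.
have S0 : 0 <= (v *m v^T) 0 0 by rewrite vvT sumr_ge0 // => i _; exact: sqr_ge0.
have CS1 : ((v *m Qm) 0 j) ^+ 2 <= (v *m v^T) 0 0 * norm2 w ^+ 2.
  rewrite vw /norm2 sqr_sqrtr; last by rewrite sumr_ge0 // => i _; exact: sqr_ge0.
  rewrite vvT mxE; exact: (@CS R m (fun i => v 0 i) (fun i => w i 0)).
have CS2 : ((v *m Qm) 0 j) ^+ 2 <= (v *m v^T) 0 0.
  rewrite coordE vvT mxE.
  have := @CS R m (fun i => v 0 i) (fun i => u j.+1 i 0).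
  have -> : \sum_i u j.+1 i 0 ^+ 2 = 1.
    have := congr1 (fun M : 'M[R]_1 => M 0 0) (@Hon j.+1 j.+1 (ltn_ord j) (ltn_ord j)).
    rewrite !mxE eqxx => H; transitivity (true%:R : R); last by []; rewrite -H.
    by apply: eq_bigr => l _; rewrite !mxE expr2.
  by rewrite mulr1.
have N0 : 0 <= norm2 w by exact: sqrtr_ge0.
have [N1|N1] := lerP (norm2 w) 1.
  apply: (le_trans CS1); apply: ler_wpM2l => //; nra.
apply: (le_trans CS2); rewrite -{1}[(v *m v^T) 0 0]mulr1; apply: ler_wpM2l => //.
exact: ltW.
Qed.

Lemma coord_bound (v : 'rV[R]_m) (j : 'I_m) : v *m U = 0 ->
  ((v *m Qm) 0 j) ^+ 2 / lambda j.+1 <=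
  ((v *m Qm) 0 j) ^+ 2 / lambda k.+1 + 2 * c * (v *m v^T) 0 0 / lambda k.+1.
Proof.
move=> vU.
set t := (v *m Qm) 0 j; set S := (v *m v^T) 0 0.
have S0 : 0 <= S by rewrite /S vvT sumr_ge0 // => i _; exact: sqr_ge0.
have lj : 0 < lambda j.+1 := @Hpos j.+1 (ltn_ord j).
have lk1 : 0 < lambda k.+1 := @Hpos k.+1 Hk.
have t0 : 0 <= t ^+ 2 by exact: sqr_ge0.
have [hj|hj] := ltnP j k.
  have e1 : 0 <= t ^+ 2 / lambda k.+1 by apply: divr_ge0 => //; exact: ltW.
  suff : t ^+ 2 / lambda j.+1 <= 2 * c * S / lambda k.+1 by move=> h; lra.
  have tb := coord_sq_bound v j vU; rewrite -/t -/S in tb.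
  have Nb := @Happ j.+1 hj.
  have lj_le : lambda j.+1 <= lambda k := @Hmono j.+1 k isT hj (ltnW Hk).
  have lk_le : lambda j.+1 <= lambda k.+1 := @Hmono j.+1 k.+1 isT (ltnW hj) Hk.
  have [g0 [g1 gl]] := @gamma_facts R _ _ lj (le_trans lj_le Hlk) lk_le
     (le_trans (@Hmono k.+1 m isT Hk (leqnn m)) Hlm).
  rewrite /gammajk in Nb.
  have gq : (((lambda k.+1)^-1 - 1) / ((lambda j.+1)^-1 - 1)) ^+ q.+1 <=
             ((lambda k.+1)^-1 - 1) / ((lambda j.+1)^-1 - 1).
    by rewrite exprS -[X in _ <= X]mulr1 ler_wpM2l // exprn_ile1.
  have Nb2 : norm2 (u j.+1 - proj_col U *m u j.+1) <= ((lambda k.+1)^-1 - 1) / ((lambda j.+1)^-1 - 1) * c.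
    apply: (le_trans Nb); exact: ler_wpM2r.
  have li : 0 <= (lambda j.+1)^-1 by rewrite invr_ge0 ltW.
  apply: (le_trans (ler_wpM2r li tb)).
  move: Nb2 gl; set G := (((lambda k.+1)^-1 - 1) / ((lambda j.+1)^-1 - 1)) => Nb2 gl.
  apply: (@le_trans _ _ (S * (G * c) / lambda j.+1)).
    by apply: (ler_wpM2r li); apply: (ler_wpM2l S0 Nb2).
  have -> : S * (G * c) / lambda j.+1 = S * c * (G / lambda j.+1).
    ring.
  apply: (@le_trans _ _ (S * c * (2 / lambda k.+1))).
    by apply: ler_wpM2l => //; apply: mulr_ge0.
  by rewrite le_eqVlt; apply/orP; left; apply/eqP; ring.
have lk_le : lambda k.+1 <= lambda j.+1 := @Hmono k.+1 j.+1 isT hj (ltn_ord j).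
have e2 : 0 <= 2 * c * S / lambda k.+1.
  by apply: divr_ge0; [apply: mulr_ge0 => //; apply: mulr_ge0 | exact: ltW].
suff : t ^+ 2 / lambda j.+1 <= t ^+ 2 / lambda k.+1 by move=> h; lra.
by apply: ler_wpM2l => //; apply: invle.
Qed.

Lemma eig_bound a : eigenvalue (defl_prec B U *m B) a -> a != 0 ->
  lambda k.+1 / (1 + 2 * m%:R * c) <= a /\ a <= lambda m.
Proof.
move=> /eigenvalueP [v Hv v0] a0.
have [vU HS] := eig_props a v Hv a0.
set S := (v *m v^T) 0 0; set T := (v *m Binv *m v^T) 0 0.
have ST : S = a * T by rewrite /S HS mxE.
have Spos : 0 < S.
  rewrite /S vvT lt_def sumr_ge0 ?andbT; last by move=> i _; exact: sqr_ge0.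
  apply/negP => /eqP /psumr_eq0P H; move/negP: v0; apply; apply/eqP/matrixP => i j.
  rewrite (ord1 i) mxE; apply/eqP; rewrite -sqrf_eq0; apply/eqP; apply: H => // l _.
  exact: sqr_ge0.
have lk1 : 0 < lambda k.+1 := @Hpos k.+1 Hk.
have lm : 0 < lambda m := lt_le_trans lk1 (@Hmono k.+1 m isT Hk (leqnn m)).
have HT : T = \sum_j ((v *m Qm) 0 j) ^+ 2 / lambda j.+1 := vBinvvT_coord v.
have HS' : S = \sum_j ((v *m Qm) 0 j) ^+ 2 := vvT_coord v.
have Tlow : S / lambda m <= T.
  rewrite HS' HT mulr_suml; apply: ler_sum => j _.
  apply: ler_wpM2l; first exact: sqr_ge0.
  apply: invle; first exact: (@Hpos j.+1 (ltn_ord j)).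
  exact: (@Hmono j.+1 m isT (ltn_ord j) (leqnn m)).
have Tup : T <= S * (1 + 2 * m%:R * c) / lambda k.+1.
  rewrite HT.
  apply: (@le_trans _ _ (\sum_(j < m) (((v *m Qm) 0 j) ^+ 2 / lambda k.+1 + 2 * c * S / lambda k.+1))).
    by apply: ler_sum => j _; exact: coord_bound.
  rewrite big_split /= -mulr_suml -HS' sumr_const card_ord -mulr_natl.
  by rewrite le_eqVlt; apply/orP; left; apply/eqP; field; rewrite gt_eqF.
have Tpos : 0 < T.
  by apply: lt_le_trans Tlow; apply: divr_gt0.
have aE : a = S / T by rewrite ST mulfK // gt_eqF.
have D0 : 0 < 1 + 2 * m%:R * c.
  by apply: ltr_wpDr => //; apply: mulr_ge0 => //; apply: mulr_ge0.
split.
  rewrite aE ler_pdivrMr // mulrAC ler_pdivlMr //.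
  by rewrite ler_pdivlMr // in Tup; rewrite mulrC.
by rewrite aE ler_pdivrMr //; rewrite ler_pdivrMr // in Tlow; rewrite mulrC.
Qed.

Lemma kappa_bound :
  Num.sqrt (kappa_eff (defl_prec B U *m B)) <= (1 + m%:R * c) * Num.sqrt (lambda m / lambda k.+1).
Proof.
have lk1 : 0 < lambda k.+1 := @Hpos k.+1 Hk.
have lm : 0 < lambda m := lt_le_trans lk1 (@Hmono k.+1 m isT Hk (leqnn m)).
have m0 : 0 <= m%:R :> R by [].
have RHS0 : 0 <= (1 + m%:R * c) * Num.sqrt (lambda m / lambda k.+1).
  by apply: mulr_ge0; [apply: addr_ge0 => //; apply: mulr_ge0 | exact: sqrtr_ge0].
rewrite /kappa_eff.
set S2 := [set a | _ /\ _].
case: (pselect (exists a, S2 a)) => [[a0 Ha0] | nS2]; last first.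
  have -> : S2 = set0.
    by apply/funext => a; apply/propext; split => // Ha; apply: nS2; exists a.
  by rewrite inf0 invr0 mulr0 sqrtr0.
have D0 : 0 < 1 + 2 * m%:R * c.
  by apply: ltr_wpDr => //; apply: mulr_ge0 => //; apply: mulr_ge0.
set L := lambda k.+1 / (1 + 2 * m%:R * c).
have Lpos : 0 < L by apply: divr_gt0.
have infL : L <= inf S2.
  apply: lb_le_inf; first by exists a0.
  by move=> a [Ha an]; exact: (@eig_bound a Ha an).1.
have supU : sup [set a | eigenvalue (defl_prec B U *m B) a] <= lambda m.
  apply: ge_sup; first by exists a0; exact: Ha0.1.
  move=> a Ha; have [->|an] := eqVneq a 0; first exact: ltW.
  exact: (@eig_bound a Ha an).2.
have kap : sup [set a | eigenvalue (defl_prec B U *m B) a] / inf S2 <= lambda m / L.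
  apply: (@le_trans _ _ (lambda m / inf S2)).
    by apply: ler_wpM2r => //; rewrite invr_ge0; apply: ltW (lt_le_trans Lpos infL).
  by apply: ler_wpM2l; [exact: ltW | exact: invle].
apply: (@le_trans _ _ (Num.sqrt (lambda m / L))).
  by rewrite ler_sqrt //; apply: divr_ge0; apply: ltW.
have -> : lambda m / L = (1 + 2 * m%:R * c) * (lambda m / lambda k.+1).
  by rewrite /L; field; rewrite !gt_eqF.
rewrite sqrtrM; last exact: ltW.
apply: ler_wpM2r; first exact: sqrtr_ge0.
have h0 : 0 <= 1 + m%:R * c by apply: addr_ge0 => //; apply: mulr_ge0.
rewrite -[X in _ <= X](@ger0_norm _ (1 + m%:R * c)) // -sqrtr_sqr ler_sqrt; last exact: sqr_ge0.
have : 0 <= m%:R * c by apply: mulr_ge0.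
nra.
Qed.

End LA.

Theorem proposition5p1 (R : realType) :
  forall (m p : nat), (2 <= p)%N ->
  exists a0 a1 a2 a3 : R,
  forall k : nat, (1 <= k)%N -> (k < m)%N ->
  exists c1 : R,
    c1 ^+ 2 <= a0 + a1 * k%:R + a2 * k%:R ^+ 2 + a3 * k%:R ^+ 3 /\
    forall (q : nat) (d : measure_display) (T : measurableType d)
      (P : probability T R)
      (B : 'M[R]_m) (lambda : nat -> R) (u : nat -> 'cV[R]_m)
      (U : T -> 'M[R]_(m, k + p)) (c : T -> R),
      (* B symmetric positive definite *)
      B^T = B ->
      (forall x : 'cV[R]_m, x != 0 -> 0 < (x^T *m B *m x) 0 0) ->
      (* eigenpairs, 1-based: lambda_1 <= ... <= lambda_m, orthonormal u_j *)
      (forall j, (1 <= j <= m)%N -> B *m u j = lambda j *: u j) ->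
      (forall i j, (1 <= i <= m)%N -> (1 <= j <= m)%N ->
         (u i)^T *m u j = (i == j)%:R%:M) ->
      (forall i j, (1 <= i)%N -> (i <= j)%N -> (j <= m)%N -> lambda i <= lambda j) ->
      0 < lambda 1%N -> lambda m <= 1 ->
      lambda k <= 2^-1 ->
      (* randomness *)
      (forall i j, measurable_fun setT (fun x => U x i j)) ->
      measurable_fun setT c ->
      (forall x, 0 <= c x) ->
      {ae P, forall x, \rank (U x) = (k + p)%N} ->
      {ae P, forall x, forall j, (1 <= j <= k)%N ->
         norm2 (u j - proj_col (U x) *m u j) <= gammajk lambda j k ^+ q.+1 * c x} ->
      (\int[P]_x (c x)%:E =
        (Num.sqrt (k%:R / (p%:R - 1)) +
         expR 1 * Num.sqrt ((k + p)%:R * (m - k)%:R) / p%:R)%:E)%E ->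
      (\int[P]_x (Num.sqrt (kappa_eff (defl_prec B (U x) *m B)))%:E
        <= (c1 * Num.sqrt (lambda m / lambda k.+1))%:E)%E.
Proof.
move=> m p hp.
pose Ec (k : nat) : R := Num.sqrt (k%:R / (p%:R - 1)) +
         expR 1 * Num.sqrt ((k + p)%:R * (m - k)%:R) / p%:R.
pose c1 (k : nat) : R := 1 + m%:R * Ec k.
exists (\sum_(i < m) c1 i ^+ 2), 0, 0, 0.
move=> k hk1 hkm; exists (c1 k); split.
  rewrite !mul0r !addr0 (bigD1 (Ordinal hkm)) //= lerDl.
  by apply: sumr_ge0 => i _; exact: sqr_ge0.
move=> q d T P B lambda u U c HBt HPD Heig Hon Hmono Hl1 Hlm Hlk HmU HmC Hc0 Hrank Happ HEc.
have Hpos : forall j, (1 <= j <= m)%N -> 0 < lambda j.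
  by move=> j /andP [j1 jm]; apply: lt_le_trans Hl1 (Hmono 1%N j isT j1 jm).
set s := Num.sqrt (lambda m / lambda k.+1).
have s0 : 0 <= s by exact: sqrtr_ge0.
pose G : T -> \bar R := fun x => (s%:E + (m%:R * s)%:E * (c x)%:E)%E.
have G0 : forall x, (0 <= G x)%E.
  move=> x; rewrite /G -EFinM -EFinD lee_fin; apply: addr_ge0 => //.
  by apply: mulr_ge0 => //; apply: mulr_ge0.
have IG : (\int[P]_x G x = (c1 k * s)%:E)%E.
  rewrite /G ge0_integralD //; last 2 first.
    by move=> x _; rewrite -EFinM lee_fin; apply: mulr_ge0 => //; apply: mulr_ge0.
    by apply: measurable_funeM; apply/measurable_realfun.measurable_EFinP.
  rewrite integral_cst //; set QQ := (X in (s%:E * X)%E); have -> : QQ = 1%E by rewrite /QQ; exact: probability_setT.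
  rewrite mule1.
  have ms : 0 <= m%:R * s by apply: mulr_ge0.
  rewrite (@ge0_integralZl_EFin _ _ _ P setT measurableT (fun x => (c x)%:E) _ _ _ ms); last 2 first.
    by move=> x _; rewrite lee_fin.
    by apply/measurable_realfun.measurable_EFinP.
  rewrite HEc -EFinM -EFinD /c1; congr EFin; rewrite /Ec; ring.
rewrite -IG ge0_integralTE; last by move=> x; rewrite lee_fin sqrtr_ge0.
apply: ge_ereal_sup => _ [h hf <-].
have := @integral_nnsfun _ _ _ P setT measurableT h; rewrite patch_setT => <-.
apply: ae_ge0_le_integral => //.
- by move=> x _; rewrite lee_fin; exact: fun_ge0.
- by apply/measurable_realfun.measurable_EFinP; exact: measurable_funP.
- apply: emeasurable_funD => //; apply: measurable_funeM.
  by apply/measurable_realfun.measurable_EFinP.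
apply: filterS2 Hrank Happ => x hr ha _.
apply: (le_trans (hf x)).
rewrite /G -EFinM -EFinD lee_fin.
have := @kappa_bound R m B lambda u Heig Hon Hpos _ (U x) HPD hr k q (c x) hkm Hmono Hlm Hlk ha (Hc0 x).
by rewrite -/s => H; apply: (le_trans H); rewrite le_eqVlt; apply/orP; left; apply/eqP; ring.
Qed.
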